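(* For all $\theta_1,\theta_2\in\mathbb{R}$, the mixed-power-affine bilinear form $g^{A,\theta_1,\theta_2}$ on $\mathrm{SPD}_n$ is symmetric and positive definite at every point, hence a Riemannian metric on $\mathrm{SPD}_n$; moreover $g^{A,\theta_1,\theta_2}=g^{A,\theta_2,\theta_1}$.
   Context: For $\theta\in\mathbb{R}$ define $\varphi_\theta:\mathrm{SPD}_n\to\mathrm{Sym}_n$ by $\varphi_\theta=\frac1\theta\mathrm{pow}_\theta$ if $\theta\neq0$ and $\varphi_0=\log$, where $\mathrm{pow}_\theta=\exp\circ(\theta\log)$ is the matrix power and $\log$ the symmetric matrix logarithm; $\partial_X\varphi_\theta(\Sigma)$ is the differential at $\Sigma$ applied to $X\in\mathrm{Sym}_n\cong T_\Sigma\mathrm{SPD}_n$. With $\theta=(\theta_1+\theta_2)/2$, the mixed-power-affine bilinear form is $g^{A,\theta_1,\theta_2}_\Sigma(X,Y)=\mathrm{tr}\big(\Sigma^{-\theta}\,\partial_X\varphi_{\theta_1}(\Sigma)\,\Sigma^{-\theta}\,\partial_Y\varphi_{\theta_2}(\Sigma)\big)$. *)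

(* Defs.v *)
(* classical reals. Matrices are represented as functions
   nat -> nat -> R; only indices < n are meaningful. *)
From Stdlib Require Import Reals Lra ClassicalEpsilon.
Open Scope R_scope.

Definition mat := nat -> nat -> R.

Fixpoint rsum (n : nat) (f : nat -> R) : R :=
  match n with O => 0 | S k => rsum k f + f k end.

Definition mmul (n : nat) (A B : mat) : mat :=
  fun i j => rsum n (fun k => A i k * B k j).

Definition mtr (n : nat) (A : mat) : R := rsum n (fun i => A i i).

Definition is_sym (n : nat) (A : mat) : Prop :=
  forall i j, (i < n)%nat -> (j < n)%nat -> A i j = A j i.

Definition is_spd (n : nat) (S : mat) : Prop :=
  is_sym n S /\
  forall x : nat -> R, (exists i, (i < n)%nat /\ x i <> 0) ->
    0 < rsum n (fun i => rsum n (fun j => x i * S i j * x j)).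

Definition is_orth (n : nat) (U : mat) : Prop :=
  forall i j, (i < n)%nat -> (j < n)%nat ->
    rsum n (fun k => U k i * U k j) = if Nat.eqb i j then 1 else 0.

(* Spectral functional calculus: for SPD S = U diag(lam) U^T,
   mfun f S = U diag(f lam) U^T (well defined independently of the
   chosen eigendecomposition; chosen by Hilbert's epsilon). *)
Definition mfun (n : nat) (f : R -> R) (S : mat) : mat :=
  epsilon (inhabits (fun _ _ => 0))
    (fun P : mat => exists (U : mat) (lam : nat -> R),
       is_orth n U /\ (forall k, (k < n)%nat -> 0 < lam k) /\
       (forall i j, (i < n)%nat -> (j < n)%nat ->
          S i j = rsum n (fun k => U i k * lam k * U j k)) /\
       (forall i j, (i < n)%nat -> (j < n)%nat ->
          P i j = rsum n (fun k => U i k * f (lam k) * U j k))).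

Definition powm (n : nat) (theta : R) (S : mat) : mat :=
  mfun n (fun l => exp (theta * ln l)) S.

Definition logm (n : nat) (S : mat) : mat := mfun n ln S.

Definition phi (n : nat) (theta : R) (S : mat) : mat :=
  if Req_dec_T theta 0 then logm n S
  else fun i j => / theta * powm n theta S i j.

Definition dphi (n : nat) (theta : R) (S X : mat) : mat :=
  epsilon (inhabits (fun _ _ => 0))
    (fun D : mat => forall i j, (i < n)%nat -> (j < n)%nat ->
       derivable_pt_lim (fun t => phi n theta (fun a b => S a b + t * X a b) i j)
         0 (D i j)).

Definition gMPA (n : nat) (theta1 theta2 : R) (S X Y : mat) : R :=
  let P := powm n (- ((theta1 + theta2) / 2)) S in
  mtr n (mmul n (mmul n (mmul n P (dphi n theta1 S X)) P) (dphi n theta2 S Y)).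

(* Main.v *)
Require Import Defs.
From Stdlib Require Import Reals Lra Lia ClassicalEpsilon FunctionalExtensionality.
Open Scope R_scope.

Module MC.
From mathcomp Require Import all_boot all_algebra.
From mathcomp Require Import Rstruct complex spectral.
Import GRing.Theory Num.Theory.

Lemma rsum_big (n : nat) (f : nat -> R) : rsum n f = (\sum_(i < n) f i)%R.
Proof.
elim: n => [|n IH] /=; first by rewrite big_ord0.
by rewrite big_ord_recr /= IH.
Qed.

Lemma Re_sum n (F : 'I_n -> R[i]) : complex.Re (\sum_(i < n) F i)%R = (\sum_(i < n) complex.Re (F i))%R.
Proof.
elim: n F => [|n IH] F; first by rewrite !big_ord0.
rewrite !big_ord_recr -IH; by case: (\sum_(i < n) F _)%R; case: (F ord_max).
Qed.

Lemma Im_sum n (F : 'I_n -> R[i]) : complex.Im (\sum_(i < n) F i)%R = (\sum_(i < n) complex.Im (F i))%R.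
Proof.
elim: n F => [|n IH] F; first by rewrite !big_ord0.
rewrite !big_ord_recr -IH; by case: (\sum_(i < n) F _)%R; case: (F ord_max).
Qed.

Lemma ReM (a b : R[i]) : complex.Re (a * b)%R = (complex.Re a * complex.Re b - complex.Im a * complex.Im b)%R.
Proof. by case: a => ? ?; case: b. Qed.
Lemma ImM (a b : R[i]) : complex.Im (a * b)%R = (complex.Im a * complex.Re b + complex.Re a * complex.Im b)%R.
Proof. by case: a => ? ?; case: b => ? ? /=; rewrite addrC. Qed.

Lemma sym_eig_complex (n : nat) (A : nat -> nat -> R) : (0 < n)%coq_nat ->
  exists (al be : R) (x y : nat -> R),
    (exists i, (i < n)%coq_nat /\ (x i <> 0 \/ y i <> 0)) /\
    (forall j, (j < n)%coq_nat ->
       rsum n (fun i => x i * A i j) = Rminus (Rmult al (x j)) (Rmult be (y j)) /\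
       rsum n (fun i => y i * A i j) = Rplus (Rmult be (x j)) (Rmult al (y j))).
Proof.
move=> /ltP n0; have [m Em] : exists m, n = m.+1 by case: n n0 => [//|m] _; exists m.
subst n; rename m into n.
pose Ac : 'M[R[i]]_n.+1 := (\matrix_(i, j) ((A i j)%:C)%C)%R.
have [a /eigenvalueP [v Hv vN0]] := eigenvalue_closed Ac n0.
pose x (i : nat) : R := complex.Re (v ord0 (inord i)).
pose y (i : nat) : R := complex.Im (v ord0 (inord i)).
exists (complex.Re a), (complex.Im a), x, y; split.
  have /negP : v != 0%R by [].
  case: (boolP [exists i, v ord0 i != 0%R]).
    move=> /existsP [i Hi] _; exists i; split; first exact/ltP/ltn_ord.
    rewrite /x /y inord_val; move: Hi; case: (v ord0 i) => re im /=.
    case: (Req_dec re 0) => [->|H]; last by left.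
    case: (Req_dec im 0) => [->|H']; last by right.
    by rewrite eqxx.
  move=> /existsPn H; case; apply/eqP/rowP => i; rewrite mxE.
  by move: (H i); rewrite negbK => /eqP.
move=> j /ltP jn.
have := congr1 (fun M : 'rV_n.+1 => M ord0 (Ordinal jn)) Hv.
rewrite /= !mxE => E.
have ER := congr1 (@complex.Re R) E.
have EI := congr1 (@complex.Im R) E.
rewrite Re_sum in ER; rewrite Im_sum in EI.
change (rsum n.+1 (fun i => x i * A i j) = (complex.Re a * x j - complex.Im a * y j)%R /\ rsum n.+1 (fun i => y i * A i j) = (complex.Im a * x j + complex.Re a * y j)%R).
rewrite !rsum_big /x /y.
have jE : inord j = Ordinal jn :> 'I_n.+1 by apply/val_inj; rewrite /= inordK.
rewrite jE; split.
  transitivity (complex.Re (a * v ord0 (Ordinal jn)))%R; last by rewrite ReM.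
  rewrite -ER; apply: eq_bigr => i _; rewrite mxE inord_val.
  by case: (v ord0 i) => re im /=; rewrite mulr0 subr0.
transitivity (complex.Im (a * v ord0 (Ordinal jn)))%R; last by rewrite ImM.
rewrite -EI; apply: eq_bigr => i _; rewrite mxE inord_val.
case: (v ord0 i) => re im /=; rewrite mulr0 add0r. done.
Qed.

Lemma orth_right (n : nat) (U : nat -> nat -> R) : is_orth n U ->
  forall i j, (i < n)%coq_nat -> (j < n)%coq_nat ->
    rsum n (fun k => U i k * U j k) = if Nat.eqb i j then 1 else 0.
Proof.
move=> HU i j /ltP ilt /ltP jlt.
pose M : 'M[R]_n := (\matrix_(a, b) U a b)%R.
have H1 : (M^T *m M = 1%:M)%R.
  apply/matrixP => a b; rewrite !mxE.
  have := HU a b (elimT ltP (ltn_ord a)) (elimT ltP (ltn_ord b)); rewrite rsum_big => E.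
  transitivity (if Nat.eqb a b then 1 else 0).
    rewrite -E; apply: eq_bigr => k _; rewrite !mxE //.
  case: (Nat.eqb_spec a b) => [ab|ne].
    have -> : a = b by apply/val_inj. 
    by rewrite eqxx.
  have -> : (a == b) = false by apply/negbTE/negP => /eqP ab; apply: ne; rewrite ab.
  by [].
have H2 := mulmx1C H1.
have := congr1 (fun N : 'M[R]_n => N (Ordinal ilt) (Ordinal jlt)) H2.
rewrite /= !mxE rsum_big => E.
transitivity ((Ordinal ilt == Ordinal jlt)%:R : R)%R.
  rewrite -E; apply: eq_bigr => k _; rewrite !mxE //.
case: (Nat.eqb_spec i j) => [e|ne].
  subst j; have -> : Ordinal ilt = Ordinal jlt by apply/val_inj.
  by rewrite eqxx.
have -> : (Ordinal ilt == Ordinal jlt) = false.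
  by apply/negbTE/negP => /eqP [].
by [].
Qed.

End MC.

Lemma rsum_ext n f g : (forall i, (i < n)%nat -> f i = g i) -> rsum n f = rsum n g.
Proof.
  induction n; intros H; simpl; auto.
  rewrite IHn by (intros; apply H; lia). rewrite H by lia. reflexivity.
Qed.

Lemma rsum_plus n f g : rsum n (fun i => f i + g i) = rsum n f + rsum n g.
Proof. induction n; simpl; [lra|rewrite IHn; lra]. Qed.

Lemma rsum_minus n f g : rsum n (fun i => f i - g i) = rsum n f - rsum n g.
Proof. induction n; simpl; [lra|rewrite IHn; lra]. Qed.

Lemma rsum_scal_l n c f : rsum n (fun i => c * f i) = c * rsum n f.
Proof. induction n; simpl; [lra|rewrite IHn; lra]. Qed.

Lemma rsum_scal_r n c f : rsum n (fun i => f i * c) = rsum n f * c.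
Proof. induction n; simpl; [lra|rewrite IHn; lra]. Qed.

Lemma rsum_0 n : rsum n (fun _ => 0) = 0.
Proof. induction n; simpl; [lra|rewrite IHn; lra]. Qed.

Lemma rsum_swap n m f :
  rsum n (fun i => rsum m (fun j => f i j)) = rsum m (fun j => rsum n (fun i => f i j)).
Proof.
  induction n; simpl.
  - rewrite rsum_0; reflexivity.
  - rewrite IHn, <- rsum_plus. reflexivity.
Qed.

Lemma rsum_delta_r n f k : (k < n)%nat ->
  rsum n (fun i => f i * (if Nat.eqb i k then 1 else 0)) = f k.
Proof.
  induction n; intros Hk; [lia|simpl].
  destruct (Nat.eq_dec k n) as [->|Hne].
  - rewrite (rsum_ext n _ (fun _ => 0)), rsum_0.
    + rewrite Nat.eqb_refl; ring.
    + intros i Hi. destruct (Nat.eqb_spec i n); [lia|ring].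
  - rewrite IHn by lia. destruct (Nat.eqb_spec n k); [lia|ring].
Qed.

Lemma rsum_delta_l n f k : (k < n)%nat ->
  rsum n (fun i => (if Nat.eqb k i then 1 else 0) * f i) = f k.
Proof.
  intros Hk. rewrite <- (rsum_delta_r n f k Hk). apply rsum_ext; intros i _.
  rewrite Nat.eqb_sym. ring.
Qed.

Lemma rsum_le n f g : (forall i, (i < n)%nat -> f i <= g i) -> rsum n f <= rsum n g.
Proof.
  induction n; intros H; simpl; [lra|].
  assert (rsum n f <= rsum n g) by (apply IHn; intros; apply H; lia).
  assert (f n <= g n) by (apply H; lia). lra.
Qed.

Lemma rsum_nonneg n f : (forall i, (i < n)%nat -> 0 <= f i) -> 0 <= rsum n f.
Proof. intros H. rewrite <- (rsum_0 n). apply rsum_le. auto. Qed.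

Lemma rsum_pos n f : (forall i, (i < n)%nat -> 0 <= f i) ->
  (exists i, (i < n)%nat /\ 0 < f i) -> 0 < rsum n f.
Proof.
  induction n; intros H [i [Hi Hp]]; [lia|simpl].
  destruct (Nat.eq_dec i n) as [->|Hne].
  - assert (0 <= rsum n f) by (apply rsum_nonneg; intros; apply H; lia). lra.
  - assert (0 < rsum n f) by (apply IHn; [intros; apply H; lia| exists i; split; [lia|auto]]).
    assert (0 <= f n) by (apply H; lia). lra.
Qed.

Lemma rsum_abs n f : Rabs (rsum n f) <= rsum n (fun i => Rabs (f i)).
Proof.
  induction n; simpl.
  - rewrite Rabs_R0; lra.
  - eapply Rle_trans; [apply Rabs_triang|]. lra.
Qed.

Lemma rsum_const n c : rsum n (fun _ => c) = INR n * c.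
Proof. induction n; simpl rsum; [simpl; ring|]. rewrite IHn, S_INR. ring. Qed.

Lemma rsum_eq0 n f : (forall i, (i < n)%nat -> 0 <= f i) -> rsum n f = 0 ->
  forall i, (i < n)%nat -> f i = 0.
Proof.
  intros H Hs i Hi. destruct (Req_dec (f i) 0) as [|Hne]; auto.
  assert (0 < rsum n f); [|lra].
  apply rsum_pos; auto. exists i. split; auto. specialize (H i Hi). lra.
Qed.

Definition meq (n : nat) (A B : mat) : Prop :=
  forall i j, (i < n)%nat -> (j < n)%nat -> A i j = B i j.
Definition trm (A : mat) : mat := fun i j => A j i.
Definition idm : mat := fun i j => if Nat.eqb i j then 1 else 0.
Definition diag (d : nat -> R) : mat := fun i j => if Nat.eqb i j then d i else 0.

Lemma mmul_assoc n A B C i j :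
  mmul n (mmul n A B) C i j = mmul n A (mmul n B C) i j.
Proof.
  unfold mmul.
  transitivity (rsum n (fun k => rsum n (fun l => A i l * B l k * C k j))).
  - apply rsum_ext; intros k _. rewrite <- rsum_scal_r. reflexivity.
  - rewrite rsum_swap. apply rsum_ext; intros l _. rewrite <- rsum_scal_l.
    apply rsum_ext; intros k _. ring.
Qed.

Lemma mmul_idl n A i j : (i < n)%nat -> mmul n idm A i j = A i j.
Proof. intros Hi. unfold mmul, idm. apply (rsum_delta_l n (fun k => A k j)). auto. Qed.

Lemma mmul_idr n A i j : (j < n)%nat -> mmul n A idm i j = A i j.
Proof. intros Hj. unfold mmul, idm. apply (rsum_delta_r n (fun k => A i k)). auto. Qed.

Lemma mmul_diag_r n A d i j : (j < n)%nat -> mmul n A (diag d) i j = A i j * d j.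
Proof.
  intros Hj. unfold mmul, diag.
  rewrite <- (rsum_delta_r n (fun k => A i k * d k) j Hj).
  apply rsum_ext; intros k _. destruct (Nat.eqb_spec k j); subst; ring.
Qed.

Lemma mmul_diag_l n A d i j : (i < n)%nat -> mmul n (diag d) A i j = d i * A i j.
Proof.
  intros Hi. unfold mmul, diag.
  rewrite <- (rsum_delta_l n (fun k => d k * A k j) i Hi).
  apply rsum_ext; intros k _. destruct (Nat.eqb_spec i k); subst; ring.
Qed.

Lemma mmul_meq n A A' B B' : meq n A A' -> meq n B B' ->
  meq n (mmul n A B) (mmul n A' B').
Proof.
  intros HA HB i j Hi Hj. unfold mmul. apply rsum_ext; intros k Hk.
  rewrite HA, HB by auto. reflexivity.
Qed.

Lemma mmul_meq_l n A A' B i j : (i < n)%nat -> (forall k, (k < n)%nat -> A i k = A' i k) ->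
  mmul n A B i j = mmul n A' B i j.
Proof. intros Hi H. unfold mmul. apply rsum_ext; intros k Hk. rewrite H; auto. Qed.

Lemma mmul_meq_r n A B B' i j : (j < n)%nat -> (forall k, (k < n)%nat -> B k j = B' k j) ->
  mmul n A B i j = mmul n A B' i j.
Proof. intros Hi H. unfold mmul. apply rsum_ext; intros k Hk. rewrite H; auto. Qed.

Lemma mmul_trm n A B i j : trm (mmul n A B) i j = mmul n (trm B) (trm A) i j.
Proof. unfold trm, mmul. apply rsum_ext; intros; ring. Qed.

Lemma meq_refl n A : meq n A A. Proof. intros i j _ _; auto. Qed.
Lemma meq_sym n A B : meq n A B -> meq n B A. Proof. intros H i j Hi Hj; symmetry; auto. Qed.
Lemma meq_trans n A B C : meq n A B -> meq n B C -> meq n A C.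
Proof. intros H1 H2 i j Hi Hj; rewrite H1, H2; auto. Qed.

Lemma is_orth_meq n U : is_orth n U <-> meq n (mmul n (trm U) U) idm.
Proof.
  unfold is_orth, meq, mmul, trm, idm. split; intros H i j Hi Hj; rewrite <- H; auto.
Qed.

Definition ortR (n : nat) (U : mat) : Prop :=
  forall i j, (i < n)%nat -> (j < n)%nat ->
    rsum n (fun k => U i k * U j k) = if Nat.eqb i j then 1 else 0.

Lemma ortR_meq n U : ortR n U <-> meq n (mmul n U (trm U)) idm.
Proof.
  unfold ortR, meq, mmul, trm, idm. split; intros H i j Hi Hj; rewrite <- H; auto.
Qed.

Definition dec (n : nat) (Sg U : mat) (lam : nat -> R) : Prop :=
  forall i j, (i < n)%nat -> (j < n)%nat -> Sg i j = rsum n (fun k => U i k * lam k * U j k).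

Lemma dec_meq n Sg U lam : dec n Sg U lam <-> meq n Sg (mmul n (mmul n U (diag lam)) (trm U)).
Proof.
  assert (E : forall i j, rsum n (fun k => U i k * lam k * U j k) = mmul n (mmul n U (diag lam)) (trm U) i j).
  { intros i j. unfold mmul at 1. apply rsum_ext; intros k Hk. rewrite mmul_diag_r by auto. unfold trm. ring. }
  unfold dec, meq. split; intros H i j Hi Hj; rewrite H by auto; rewrite E; auto.
Qed.

Lemma mtr_meq n A B : meq n A B -> mtr n A = mtr n B.
Proof. intros H. unfold mtr. apply rsum_ext; intros; auto. Qed.

Lemma mtr_comm n A B : mtr n (mmul n A B) = mtr n (mmul n B A).
Proof.
  unfold mtr, mmul. rewrite rsum_swap. apply rsum_ext; intros; apply rsum_ext; intros; ring.
Qed.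

Lemma mtr_conj n U M : is_orth n U -> mtr n (mmul n (mmul n U M) (trm U)) = mtr n M.
Proof.
  intros HU. rewrite mtr_comm. unfold mtr. apply rsum_ext; intros i Hi.
  rewrite <- mmul_assoc. rewrite (mmul_meq_l n _ idm); auto.
  - apply mmul_idl; auto.
  - intros k Hk. apply is_orth_meq; auto.
Qed.

Lemma sq_pos_sum n x : (exists i, (i < n)%nat /\ x i <> 0) -> 0 < rsum n (fun i => x i * x i).
Proof.
  intros [i [Hi Hx]]. apply rsum_pos.
  - intros; apply Rle_0_sqr.
  - exists i; split; auto. apply Rsqr_pos_lt; auto.
Qed.

Lemma real_eigvec n A : (0 < n)%nat -> is_sym n A ->
  exists al z, rsum n (fun i => z i * z i) = 1 /\
    forall i, (i < n)%nat -> rsum n (fun j => A i j * z j) = al * z i.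
Proof.
  intros Hn HA.
  destruct (MC.sym_eig_complex n A Hn) as (al & be & x & y & Hnz & Heq).
  assert (Hb : be = 0).
  { assert (E1 : rsum n (fun j => rsum n (fun i => x i * A i j) * y j)
               = al * rsum n (fun j => x j * y j) - be * rsum n (fun j => y j * y j)).
    { rewrite <- !rsum_scal_l, <- rsum_minus. apply rsum_ext; intros j Hj.
      destruct (Heq j Hj) as [-> _]. ring. }
    assert (E2 : rsum n (fun j => rsum n (fun i => y i * A i j) * x j)
               = be * rsum n (fun j => x j * x j) + al * rsum n (fun j => x j * y j)).
    { rewrite <- !rsum_scal_l, <- rsum_plus. apply rsum_ext; intros j Hj.
      destruct (Heq j Hj) as [_ ->]. ring. }
    assert (E3 : rsum n (fun j => rsum n (fun i => x i * A i j) * y j)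
               = rsum n (fun j => rsum n (fun i => y i * A i j) * x j)).
    { transitivity (rsum n (fun j => rsum n (fun i => x i * A i j * y j))).
      { apply rsum_ext; intros; rewrite rsum_scal_r; auto. }
      rewrite rsum_swap. apply rsum_ext; intros i Hi. rewrite <- rsum_scal_r.
      apply rsum_ext; intros j Hj. rewrite (HA i j) by auto. ring. }
    assert (Hpos : 0 < rsum n (fun j => x j * x j) + rsum n (fun j => y j * y j)).
    { destruct Hnz as [i [Hi [H|H]]].
      - assert (0 < rsum n (fun j => x j * x j)) by (apply sq_pos_sum; eauto).
        assert (0 <= rsum n (fun j => y j * y j)) by (apply rsum_nonneg; intros; apply Rle_0_sqr). lra.
      - assert (0 < rsum n (fun j => y j * y j)) by (apply sq_pos_sum; eauto).
        assert (0 <= rsum n (fun j => x j * x j)) by (apply rsum_nonneg; intros; apply Rle_0_sqr). lra. }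
    assert (be * (rsum n (fun j => x j * x j) + rsum n (fun j => y j * y j)) = 0) by nra.
    apply Rmult_integral in H. destruct H; [auto|lra]. }
  subst be.
  assert (Hz : exists z, (exists i, (i < n)%nat /\ z i <> 0) /\
     forall j, (j < n)%nat -> rsum n (fun i => z i * A i j) = al * z j).
  { destruct (classic (exists i, (i < n)%nat /\ x i <> 0)) as [Hx|Hx].
    - exists x. split; auto. intros j Hj. destruct (Heq j Hj) as [-> _]. ring.
    - exists y. split.
      + destruct Hnz as [i [Hi [H|H]]]; [exfalso; apply Hx; eauto|eauto].
      + intros j Hj. destruct (Heq j Hj) as [_ ->].
        assert (x j = 0) by (apply NNPP; intros C; apply Hx; eauto). rewrite H; ring. }
  destruct Hz as [z [Hnz' Hz]].
  set (s := rsum n (fun i => z i * z i)).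
  assert (Hs : 0 < s) by (apply sq_pos_sum; auto).
  exists al, (fun i => z i / sqrt s). split.
  - transitivity (rsum n (fun i => z i * z i) * / (sqrt s * sqrt s)).
    + rewrite <- rsum_scal_r. apply rsum_ext; intros. field.
      apply Rgt_not_eq, sqrt_lt_R0; auto.
    + rewrite sqrt_sqrt by lra. fold s. field. lra.
  - intros i Hi.
    transitivity (rsum n (fun j => z j * A j i) / sqrt s).
    + unfold Rdiv. rewrite <- rsum_scal_r. apply rsum_ext; intros j Hj.
      rewrite (HA i j) by auto. ring.
    + rewrite Hz by auto. field. apply Rgt_not_eq, sqrt_lt_R0; auto.
Qed.

Definition dv (m : nat) (w : nat -> R) (i : nat) : R := w i - idm i m.
Definition hh (m : nat) (w : nat -> R) : mat := fun i j =>
  if Req_dec_T (w m) 1 then idm i j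
  else idm i j - 2 / (2 - 2 * w m) * dv m w i * dv m w j.

Lemma idm_sym i j : idm i j = idm j i.
Proof. unfold idm. rewrite Nat.eqb_sym. auto. Qed.

Lemma sum_idm_l n f i : (i < n)%nat -> rsum n (fun k => idm i k * f k) = f i.
Proof. intros; unfold idm; apply rsum_delta_l; auto. Qed.
Lemma sum_idm_r n f j : (j < n)%nat -> rsum n (fun k => f k * idm k j) = f j.
Proof. intros; unfold idm; apply rsum_delta_r; auto. Qed.

Lemma hh_sym m w i j : hh m w i j = hh m w j i.
Proof. unfold hh. destruct Req_dec_T; rewrite idm_sym; [auto|ring]. Qed.

Lemma dv_sq m w : rsum (S m) (fun k => dv m w k * dv m w k) =
  rsum (S m) (fun k => w k * w k) - 2 * w m + 1.
Proof.
  unfold dv.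
  transitivity (rsum (S m) (fun k => w k * w k) - 2 * rsum (S m) (fun k => w k * idm k m)
                + rsum (S m) (fun k => 1 * idm k m)).
  - rewrite <- rsum_scal_l, <- rsum_minus, <- rsum_plus. apply rsum_ext; intros k _.
    unfold idm. destruct (Nat.eqb k m); ring.
  - unfold idm. rewrite (rsum_delta_r (S m) w m), (rsum_delta_r (S m) (fun _ => 1) m) by lia. ring.
Qed.

Lemma hh_col m w : rsum (S m) (fun i => w i * w i) = 1 ->
  forall i, (i < S m)%nat -> hh m w i m = w i.
Proof.
  intros Hw i Hi. unfold hh. destruct Req_dec_T as [E|E].
  - simpl in Hw. rewrite E in Hw.
    assert (H0 : rsum m (fun i => w i * w i) = 0) by lra.
    destruct (Nat.eq_dec i m) as [->|Hne].
    + unfold idm; rewrite Nat.eqb_refl; auto.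
    + assert (Hi' : (i < m)%nat) by lia.
      pose proof (rsum_eq0 m _ (fun k _ => Rle_0_sqr (w k)) H0 i Hi') as Hz.
      apply Rmult_integral in Hz. unfold idm. destruct (Nat.eqb_spec i m); [lia|].
      destruct Hz; auto.
  - unfold dv. replace (idm m m) with 1 by (unfold idm; rewrite Nat.eqb_refl; auto). field.
    intros C. apply E. lra.
Qed.

Lemma hh_orth m w : rsum (S m) (fun i => w i * w i) = 1 ->
  meq (S m) (mmul (S m) (hh m w) (hh m w)) idm.
Proof.
  intros Hw i j Hi Hj. unfold hh. destruct Req_dec_T as [E|E].
  - apply mmul_idl; auto.
  - set (c := 2 / (2 - 2 * w m)). unfold mmul.
    transitivity (rsum (S m) (fun k => idm i k * idm k j)
       + (- (c * dv m w i)) * rsum (S m) (fun k => dv m w k * idm k j)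
       + (- (c * dv m w j)) * rsum (S m) (fun k => idm i k * dv m w k)
       + (c * c * dv m w i * dv m w j) * rsum (S m) (fun k => dv m w k * dv m w k)).
    + rewrite <- !rsum_scal_l, <- !rsum_plus. apply rsum_ext; intros k _. ring.
    + rewrite dv_sq, Hw.
      rewrite (sum_idm_l (S m) (fun k => idm k j) i) by auto.
      rewrite (sum_idm_r (S m) (dv m w) j) by auto.
      rewrite (sum_idm_l (S m) (dv m w) i) by auto.
      unfold c. field. intros C; apply E; lra.
Qed.

Lemma meq_mmul_l n A A' B : meq n A A' -> meq n (mmul n A B) (mmul n A' B).
Proof. intros H. apply mmul_meq; auto using meq_refl. Qed.
Lemma meq_mmul_r n A B B' : meq n B B' -> meq n (mmul n A B) (mmul n A B').
Proof. intros H. apply mmul_meq; auto using meq_refl. Qed.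
Lemma meq_assoc n A B C : meq n (mmul n (mmul n A B) C) (mmul n A (mmul n B C)).
Proof. intros i j _ _. apply mmul_assoc. Qed.
Lemma meq_idl n A : meq n (mmul n idm A) A.
Proof. intros i j Hi _. apply mmul_idl; auto. Qed.
Lemma meq_idr n A : meq n (mmul n A idm) A.
Proof. intros i j _ Hj. apply mmul_idr; auto. Qed.
Lemma meq_trm_mmul n A B : meq n (trm (mmul n A B)) (mmul n (trm B) (trm A)).
Proof. intros i j _ _. apply mmul_trm. Qed.

Lemma mmul_assocF n A B C : mmul n (mmul n A B) C = mmul n A (mmul n B C).
Proof. extensionality i. extensionality j. apply mmul_assoc. Qed.

Lemma sym3 n H A : (forall i j, H i j = H j i) -> is_sym n A ->
  is_sym n (mmul n (mmul n H A) H).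
Proof.
  intros Hs HA i j Hi Hj. unfold mmul.
  transitivity (rsum n (fun k => rsum n (fun l => H i l * A l k * H k j))).
  { apply rsum_ext; intros; rewrite rsum_scal_r; auto. }
  transitivity (rsum n (fun k => rsum n (fun l => H j l * A l k * H k i))).
  2:{ apply rsum_ext; intros; rewrite rsum_scal_r; auto. }
  rewrite rsum_swap. apply rsum_ext; intros l Hl. apply rsum_ext; intros k Hk.
  rewrite (Hs i l), (Hs k j), (HA l k) by auto. ring.
Qed.

Definition bext (m : nat) (V : mat) : mat := fun i j =>
  if Nat.ltb i m then (if Nat.ltb j m then V i j else 0) else idm i j.
Definition mext (m : nat) (mu : nat -> R) (al : R) : nat -> R := fun k =>
  if Nat.ltb k m then mu k else al.

Lemma bext_orth m V : is_orth m V -> is_orth (S m) (bext m V).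
Proof.
  intros HV i j Hi Hj. simpl rsum.
  unfold bext at 3 4. rewrite Nat.ltb_irrefl.
  rewrite (rsum_ext m _ (fun k => (if Nat.ltb i m then V k i else 0) * (if Nat.ltb j m then V k j else 0))).
  2:{ intros k Hk. unfold bext. apply Nat.ltb_lt in Hk. rewrite Hk. auto. }
  unfold idm.
  destruct (Nat.ltb_spec i m); destruct (Nat.ltb_spec j m).
  - rewrite HV by auto. destruct (Nat.eqb_spec m i); [lia|]. ring.
  - assert (j = m) by lia. subst j.
    rewrite (rsum_ext m _ (fun _ => 0)), rsum_0 by (intros; ring). rewrite Nat.eqb_refl.
    destruct (Nat.eqb_spec m i); [lia|]. destruct (Nat.eqb_spec i m); [lia|]. ring.
  - assert (i = m) by lia. subst i.
    rewrite (rsum_ext m _ (fun _ => 0)), rsum_0 by (intros; ring). rewrite Nat.eqb_refl.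
    destruct (Nat.eqb_spec m j); [lia|]. ring.
  - assert (i = m) by lia. assert (j = m) by lia. subst.
    rewrite (rsum_ext m _ (fun _ => 0)), rsum_0 by (intros; ring). rewrite Nat.eqb_refl. ring.
Qed.

Lemma bext_dec m Sg V mu al : dec m Sg V mu ->
  (forall i, (i < S m)%nat -> Sg i m = al * idm i m) ->
  (forall j, (j < S m)%nat -> Sg m j = al * idm m j) ->
  dec (S m) Sg (bext m V) (mext m mu al).
Proof.
  intros HV Hc Hr i j Hi Hj. simpl rsum.
  unfold bext at 3 4, mext at 2. rewrite Nat.ltb_irrefl.
  rewrite (rsum_ext m _ (fun k => (if Nat.ltb i m then V i k else 0) * mu k * (if Nat.ltb j m then V j k else 0))).
  2:{ intros k Hk. unfold bext, mext. assert (Hk' := Hk). apply Nat.ltb_lt in Hk'. rewrite Hk'.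
      destruct (Nat.ltb_spec i m); destruct (Nat.ltb_spec j m); unfold idm;
      repeat match goal with |- context [Nat.eqb ?a ?b] => destruct (Nat.eqb_spec a b) end; try lia; ring. }
  unfold idm.
  destruct (Nat.ltb_spec i m); destruct (Nat.ltb_spec j m).
  - rewrite HV by auto. destruct (Nat.eqb_spec i m); [lia|]. ring.
  - assert (j = m) by lia. subst j. rewrite Hc by auto. unfold idm.
    rewrite (rsum_ext m _ (fun _ => 0)), rsum_0 by (intros; ring).
    destruct (Nat.eqb_spec i m); [lia|]. ring.
  - assert (i = m) by lia. subst i. rewrite Hr by auto. unfold idm.
    rewrite (rsum_ext m _ (fun _ => 0)), rsum_0 by (intros; ring).
    rewrite Nat.eqb_refl. destruct (Nat.eqb_spec m j); [lia|]. ring.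
  - assert (i = m) by lia. assert (j = m) by lia. subst. rewrite Hc by auto. unfold idm.
    rewrite (rsum_ext m _ (fun _ => 0)), rsum_0 by (intros; ring).
    rewrite Nat.eqb_refl. ring.
Qed.

Theorem spectral n A : is_sym n A -> exists V mu, is_orth n V /\ dec n A V mu.
Proof.
  revert A. induction n as [|m IH]; intros A HA.
  { exists (fun _ _ => 0), (fun _ => 0). split; intros i j Hi; lia. }
  destruct (real_eigvec (S m) A) as [al [w [Hw Hev]]]; [lia|auto|].
  set (H := hh m w).
  assert (HHs : forall i j, H i j = H j i) by (intros; apply hh_sym).
  assert (HHo : meq (S m) (mmul (S m) H H) idm) by (apply hh_orth; auto).
  assert (HHc : forall i, (i < S m)%nat -> H i m = w i) by (apply hh_col; auto).
  set (Sp := mmul (S m) (mmul (S m) H A) H).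
  assert (Hsym : is_sym (S m) Sp) by (apply sym3; auto).
  assert (Hcol : forall i, (i < S m)%nat -> Sp i m = al * idm i m).
  { intros i Hi. unfold Sp.
    rewrite mmul_assoc. unfold mmul at 1.
    transitivity (rsum (S m) (fun l => H i l * (al * H l m))).
    - apply rsum_ext; intros l Hl. f_equal. unfold mmul.
      rewrite HHc by lia. rewrite <- Hev by auto. apply rsum_ext; intros k Hk.
      rewrite HHc by auto. auto.
    - transitivity (al * mmul (S m) H H i m).
      + unfold mmul. rewrite <- rsum_scal_l. apply rsum_ext; intros; ring.
      + rewrite HHo by lia. auto. }
  assert (Hrow : forall j, (j < S m)%nat -> Sp m j = al * idm m j).
  { intros j Hj. rewrite Hsym by lia. rewrite Hcol by auto. rewrite idm_sym. auto. }
  destruct (IH Sp) as [V' [mu' [HV'o HV'd]]].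
  { intros i j Hi Hj. apply Hsym; lia. }
  set (B := bext m V'). set (mu := mext m mu' al).
  assert (HBo : is_orth (S m) B) by (apply bext_orth; auto).
  assert (HBd : dec (S m) Sp B mu) by (apply bext_dec; auto).
  exists (mmul (S m) H B), mu. split.
  - apply is_orth_meq.
    apply meq_trans with (mmul (S m) (mmul (S m) (trm B) (trm H)) (mmul (S m) H B)).
    { apply meq_mmul_l, meq_trm_mmul. }
    apply meq_trans with (mmul (S m) (mmul (S m) (trm B) H) (mmul (S m) H B)).
    { apply meq_mmul_l. intros i j _ _. unfold mmul, trm. apply rsum_ext; intros.
      rewrite HHs. auto. }
    apply meq_trans with (mmul (S m) (trm B) (mmul (S m) (mmul (S m) H H) B)).
    { apply meq_trans with (mmul (S m) (trm B) (mmul (S m) H (mmul (S m) H B))).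
      apply meq_assoc. apply meq_mmul_r. apply meq_sym, meq_assoc. }
    apply meq_trans with (mmul (S m) (trm B) (mmul (S m) idm B)).
    { apply meq_mmul_r, meq_mmul_l; auto. }
    apply meq_trans with (mmul (S m) (trm B) B).
    { apply meq_mmul_r, meq_idl. }
    apply is_orth_meq; auto.
  - apply dec_meq.
    (* A = H (H A H) H = H Sp H *)
    apply meq_trans with (mmul (S m) (mmul (S m) H Sp) H).
    { apply meq_trans with (mmul (S m) (mmul (S m) idm A) idm).
      { apply meq_sym. apply meq_trans with (mmul (S m) idm A). apply meq_idr. apply meq_idl. }
      apply meq_trans with (mmul (S m) (mmul (S m) (mmul (S m) H H) A) (mmul (S m) H H)).
      { apply mmul_meq; [apply meq_mmul_l|]; apply meq_sym; auto. }
      unfold Sp. rewrite !mmul_assocF. apply meq_refl. }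
    apply meq_trans with (mmul (S m) (mmul (S m) H (mmul (S m) (mmul (S m) B (diag mu)) (trm B))) H).
    { apply meq_mmul_l, meq_mmul_r. apply dec_meq; auto. }
    apply meq_trans with (mmul (S m) (mmul (S m) (mmul (S m) H B) (diag mu)) (mmul (S m) (trm B) (trm H))).
    { assert (Ht : trm H = H) by (extensionality i; extensionality j; apply HHs).
      rewrite Ht, !mmul_assocF. apply meq_refl. }
    apply meq_mmul_r. apply meq_sym, meq_trm_mmul.
Qed.

Lemma orth_ortR n U : is_orth n U -> ortR n U.
Proof. intros H i j Hi Hj. apply MC.orth_right; auto. Qed.

Lemma eig_col n B U lam : is_orth n U -> dec n B U lam ->
  forall i k, (i < n)%nat -> (k < n)%nat ->
  rsum n (fun j => B i j * U j k) = lam k * U i k.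
Proof.
  intros HU HB i k Hi Hk.
  transitivity (rsum n (fun l => U i l * lam l * rsum n (fun j => U j l * U j k))).
  - transitivity (rsum n (fun j => rsum n (fun l => U i l * lam l * U j l * U j k))).
    + apply rsum_ext; intros j Hj. rewrite HB by auto. rewrite <- rsum_scal_r. auto.
    + rewrite rsum_swap. apply rsum_ext; intros l Hl. rewrite <- rsum_scal_l.
      apply rsum_ext; intros; ring.
  - transitivity (rsum n (fun l => U i l * lam l * (if Nat.eqb l k then 1 else 0))).
    + apply rsum_ext; intros l Hl. rewrite HU by auto. auto.
    + rewrite (rsum_delta_r n (fun l => U i l * lam l) k Hk). ring.
Qed.

Definition Wm (n : nat) (U V : mat) (k j : nat) : R := rsum n (fun e => U e k * V e j).
Definition Qf (n : nat) (U M V : mat) (k j : nat) : R :=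
  rsum n (fun a => rsum n (fun b => U a k * M a b * V b j)).

Lemma Qf_right n U B V mu : is_orth n V -> dec n B V mu ->
  forall k j, (j < n)%nat -> Qf n U B V k j = mu j * Wm n U V k j.
Proof.
  intros HV HB k j Hj. unfold Qf, Wm. rewrite <- rsum_scal_l. apply rsum_ext; intros a Ha.
  transitivity (U a k * rsum n (fun b => B a b * V b j)).
  - rewrite <- rsum_scal_l. apply rsum_ext; intros; ring.
  - rewrite (eig_col n B V mu) by auto. ring.
Qed.

Lemma Qf_left n U B V lam : is_sym n B -> is_orth n U -> dec n B U lam ->
  forall k j, (k < n)%nat -> Qf n U B V k j = lam k * Wm n U V k j.
Proof.
  intros HBs HU HB k j Hk. unfold Qf, Wm. rewrite rsum_swap. rewrite <- rsum_scal_l.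
  apply rsum_ext; intros b Hb.
  transitivity (rsum n (fun a => B b a * U a k) * V b j).
  - rewrite <- rsum_scal_r. apply rsum_ext; intros a Ha. rewrite (HBs b a) by auto. ring.
  - rewrite (eig_col n B U lam) by auto. ring.
Qed.

Lemma Qf_lin n U V B X t k j :
  Qf n U (fun a b => B a b + t * X a b) V k j = Qf n U B V k j + t * Qf n U X V k j.
Proof.
  unfold Qf. rewrite <- rsum_scal_l, <- rsum_plus. apply rsum_ext; intros a _.
  rewrite <- rsum_scal_l, <- rsum_plus. apply rsum_ext; intros; ring.
Qed.

Lemma recon_l n U V p j : ortR n U -> (p < n)%nat ->
  rsum n (fun i => U p i * Wm n U V i j) = V p j.
Proof.
  intros HU Hp. unfold Wm.
  transitivity (rsum n (fun e => rsum n (fun i => U p i * U e i) * V e j)).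
  - transitivity (rsum n (fun i => rsum n (fun e => U p i * U e i * V e j))).
    + apply rsum_ext; intros i _. rewrite <- (rsum_scal_l n (U p i)). apply rsum_ext; intros; ring.
    + rewrite rsum_swap. apply rsum_ext; intros e _. rewrite rsum_scal_r; auto.
  - transitivity (rsum n (fun e => (if Nat.eqb p e then 1 else 0) * V e j)).
    + apply rsum_ext; intros e He. rewrite HU by auto. auto.
    + apply (rsum_delta_l n (fun e => V e j)); auto.
Qed.

Lemma recon_r n U V q i : ortR n V -> (q < n)%nat ->
  rsum n (fun j => Wm n U V i j * V q j) = U q i.
Proof.
  intros HV Hq. unfold Wm.
  transitivity (rsum n (fun e => U e i * rsum n (fun j => V e j * V q j))).
  - transitivity (rsum n (fun j => rsum n (fun e => U e i * V e j * V q j))).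
    + apply rsum_ext; intros j _. rewrite <- (rsum_scal_r n (V q j)). apply rsum_ext; intros; ring.
    + rewrite rsum_swap. apply rsum_ext; intros e _. rewrite <- (rsum_scal_l n (U e i)). apply rsum_ext; intros; ring.
  - transitivity (rsum n (fun e => U e i * (if Nat.eqb e q then 1 else 0))).
    + apply rsum_ext; intros e He. rewrite HV by auto. auto.
    + apply (rsum_delta_r n (fun e => U e i)); auto.
Qed.

Lemma lemA n U V g h p q : ortR n U -> ortR n V -> (p < n)%nat -> (q < n)%nat ->
  rsum n (fun i => rsum n (fun j => U p i * Wm n U V i j * (g j - h i) * V q j))
  = rsum n (fun j => V p j * g j * V q j) - rsum n (fun i => U p i * h i * U q i).
Proof.
  intros HU HV Hp Hq.
  transitivity (rsum n (fun i => rsum n (fun j => U p i * Wm n U V i j * g j * V q j))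
              - rsum n (fun i => U p i * h i * rsum n (fun j => Wm n U V i j * V q j))).
  - rewrite <- rsum_minus. apply rsum_ext; intros i _.
    rewrite <- rsum_scal_l, <- rsum_minus. apply rsum_ext; intros; ring.
  - f_equal.
    + rewrite rsum_swap. apply rsum_ext; intros j _.
      rewrite <- (recon_l n U V p j) by auto. rewrite <- !rsum_scal_r. apply rsum_ext; intros; ring.
    + apply rsum_ext; intros i _. rewrite recon_r by auto. auto.
Qed.

Lemma W_rel_t n Sg X U lam V mu t : is_sym n Sg -> is_orth n U -> dec n Sg U lam ->
  is_orth n V -> dec n (fun a b => Sg a b + t * X a b) V mu ->
  forall k j, (k < n)%nat -> (j < n)%nat ->
  (mu j - lam k) * Wm n U V k j = t * Qf n U X V k j.
Proof.
  intros HS HU HdU HV HdV k j Hk Hj.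
  pose proof (Qf_right n U _ V mu HV HdV k j Hj) as E1.
  rewrite Qf_lin in E1. rewrite (Qf_left n U Sg V lam HS HU HdU k j Hk) in E1. lra.
Qed.

Lemma W_rel n B U lam V mu : is_sym n B -> is_orth n U -> dec n B U lam ->
  is_orth n V -> dec n B V mu ->
  forall k j, (k < n)%nat -> (j < n)%nat -> (mu j - lam k) * Wm n U V k j = 0.
Proof.
  intros HS HU HdU HV HdV k j Hk Hj.
  rewrite (W_rel_t n B (fun _ _ => 0) U lam V mu 0); auto. ring.
  intros a b Ha Hb. rewrite HdV by auto. ring.
Qed.

Lemma mfun_char n f B V mu : is_sym n B -> is_orth n V -> dec n B V mu ->
  (forall k, (k < n)%nat -> 0 < mu k) ->
  forall p q, (p < n)%nat -> (q < n)%nat ->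
  mfun n f B p q = rsum n (fun j => V p j * f (mu j) * V q j).
Proof.
  intros HS HV HdV Hmu p q Hp Hq. unfold mfun.
  match goal with |- epsilon ?i ?P p q = _ =>
    destruct (epsilon_spec i P) as [U [lam [HU [Hl [HdU HP]]]]] end.
  { exists (fun i j => rsum n (fun k => V i k * f (mu k) * V j k)), V, mu.
    repeat split; auto. }
  rewrite HP by auto.
  assert (E := lemA n U V (fun j => f (mu j)) (fun i => f (lam i)) p q
                 (orth_ortR n U HU) (orth_ortR n V HV) Hp Hq).
  rewrite (rsum_ext n _ (fun _ => 0)) in E.
  - rewrite rsum_0 in E. lra.
  - intros i Hi. rewrite (rsum_ext n _ (fun _ => 0)), rsum_0; auto.
    intros j Hj. pose proof (W_rel n B U lam V mu HS HU HdU HV HdV i j Hi Hj) as Wr.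
    destruct (Req_dec (Wm n U V i j) 0) as [Z|Z].
    + rewrite Z; ring.
    + assert (mu j = lam i) by (apply Rmult_integral in Wr; destruct Wr; [lra|contradiction]).
      rewrite H; ring.
Qed.

Definition dd (f f' : R -> R) (x y : R) : R := if Req_dec_T x y then f' x else (f x - f y) / (x - y).

Lemma dd_mul (f f' : R -> R) x y : dd f f' x y * (x - y) = f x - f y.
Proof.
  unfold dd. destruct Req_dec_T as [E|E].
  - subst. ring.
  - field. lra.
Qed.

Lemma dd_sym (f f' : R -> R) x y : dd f f' x y = dd f f' y x.
Proof.
  unfold dd. destruct (Req_dec_T x y) as [E|E]; destruct (Req_dec_T y x) as [E'|E'].
  - subst; auto.
  - subst; exfalso; auto.
  - subst; exfalso; auto.
  - field. lra.
Qed.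

Lemma dd_mvt (f f' : R -> R) (F1 : forall x, 0 < x -> derivable_pt_lim f x (f' x)) x y : 0 < x -> 0 < y -> exists c, Rmin x y <= c <= Rmax x y /\ dd f f' x y = f' c.
Proof.
  intros Hx Hy. unfold dd. destruct Req_dec_T as [E|E].
  - exists x. subst. split; auto. unfold Rmin, Rmax; destruct Rle_dec; lra.
  - destruct (Rlt_le_dec x y) as [Hl|Hl].
    + destruct (MVT_cor2 f f' x y Hl) as [c [Hc1 Hc2]].
      { intros c Hc. apply F1. lra. }
      exists c. split. unfold Rmin, Rmax; destruct Rle_dec; lra.
      replace (f x - f y) with (-(f y - f x)) by ring.
      rewrite Hc1. field. lra.
    + assert (Hl' : y < x) by lra.
      destruct (MVT_cor2 f f' y x Hl') as [c [Hc1 Hc2]].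
      { intros c Hc. apply F1. lra. }
      exists c. split. unfold Rmin, Rmax; destruct Rle_dec; lra.
      rewrite Hc1. field. lra.
Qed.

Lemma dd_bound (f f' : R -> R) (F1 : forall x, 0 < x -> derivable_pt_lim f x (f' x))
  (F2 : forall a b, 0 < a -> exists M, forall x, a <= x <= b -> Rabs (f' x) <= M) a b : 0 < a -> exists M, 0 <= M /\
  forall x y, a <= x <= b -> a <= y <= b -> Rabs (dd f f' x y) <= M.
Proof.
  intros Ha. destruct (F2 a b Ha) as [M HM].
  exists (Rabs M). split; [apply Rabs_pos|].
  intros x y Hx Hy. destruct (dd_mvt f f' F1 x y) as [c [Hc ->]]; try lra.
  eapply Rle_trans; [apply HM|].
  - unfold Rmin, Rmax in Hc; destruct Rle_dec; lra.
  - apply Rle_abs.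
Qed.

Lemma dd_cont (f f' : R -> R) (F1 : forall x, 0 < x -> derivable_pt_lim f x (f' x)) x y0 : 0 < x -> 0 < y0 -> forall eps, 0 < eps -> exists del, 0 < del /\
  forall y, 0 < y -> Rabs (y - y0) < del -> Rabs (dd f f' x y - dd f f' x y0) < eps.
Proof.
  intros Hx Hy0 eps He.
  destruct (Req_dec x y0) as [E|E].
  - subst y0. destruct (F1 x Hx eps He) as [del Hdel].
    exists del. split; [apply cond_pos|]. intros y Hy Hyd.
    destruct (Req_dec y x) as [E'|E'].
    + subst. rewrite Rminus_diag, Rabs_R0. auto.
    + specialize (Hdel (y - x) ltac:(lra) Hyd).
      replace (x + (y - x)) with y in Hdel by ring.
      rewrite (dd_sym f f' x y). unfold dd at 1. destruct Req_dec_T as [E2|E2]; [lra|].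
      unfold dd. destruct Req_dec_T as [_|E3]; [|lra]. auto.
  - assert (Hc : continuity_pt f y0) by (apply derivable_continuous_pt; exists (f' y0); apply F1; auto).
    assert (Hg : continuity_pt (fun y => (f x - f y) / (x - y)) y0).
    { apply continuity_pt_div.
      - apply continuity_pt_minus; [apply continuity_pt_const; intros ? ?; auto|auto].
      - apply continuity_pt_minus; [apply continuity_pt_const; intros ? ?; auto|apply derivable_continuous_pt, derivable_pt_id].
      - lra. }
    destruct (Hg eps He) as [alp [Halp Hd]].
    exists (Rmin alp (Rabs (x - y0))). split.
    { apply Rmin_pos; auto. apply Rabs_pos_lt. lra. }
    intros y Hy Hyd.
    assert (Hyx : y <> x).
    { intros ->. assert (Rabs (x - y0) < Rabs (x - y0)); [|lra].
      eapply Rlt_le_trans; [apply Hyd|apply Rmin_r]. }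
    unfold dd. destruct Req_dec_T; [lra|]. destruct Req_dec_T; [lra|].
    destruct (Req_dec y y0) as [->|Hne].
    { rewrite Rminus_diag, Rabs_R0. auto. }
    apply (Hd y). split.
    + unfold D_x, no_cond. split; auto.
    + simpl. unfold R_dist. eapply Rlt_le_trans; [apply Hyd|apply Rmin_l].
Qed.


Lemma term_le_rsum n f k : (forall i, (i < n)%nat -> 0 <= f i) -> (k < n)%nat -> f k <= rsum n f.
Proof.
  induction n; intros H Hk; [lia|simpl].
  destruct (Nat.eq_dec k n) as [->|Hne].
  - assert (0 <= rsum n f) by (apply rsum_nonneg; intros; apply H; lia). lra.
  - assert (f k <= rsum n f) by (apply IHn; [intros; apply H; lia|lia]).
    assert (0 <= f n) by (apply H; lia). lra.
Qed.


Lemma sq_le1_abs x : x * x <= 1 -> Rabs x <= 1.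
Proof.
  intros H. destruct (Rle_dec (Rabs x) 1) as [|Hn]; auto.
  assert (Rabs x * Rabs x > 1) by nra. rewrite <- Rabs_mult, Rabs_pos_eq in H0 by nra. lra.
Qed.

Lemma orth_entry n U a k : is_orth n U -> (a < n)%nat -> (k < n)%nat -> Rabs (U a k) <= 1.
Proof.
  intros HU Ha Hk. apply sq_le1_abs.
  assert (E := HU k k Hk Hk). rewrite Nat.eqb_refl in E.
  rewrite <- E. apply (term_le_rsum n (fun e => U e k * U e k)); auto. intros; apply Rle_0_sqr.
Qed.

Lemma W_bound n U V k j : is_orth n U -> is_orth n V -> (k < n)%nat -> (j < n)%nat ->
  Rabs (Wm n U V k j) <= 1.
Proof.
  intros HU HV Hk Hj. unfold Wm. eapply Rle_trans; [apply rsum_abs|].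
  assert (E1 := HU k k Hk Hk). assert (E2 := HV j j Hj Hj). rewrite Nat.eqb_refl in E1, E2.
  apply Rle_trans with (rsum n (fun e => (U e k * U e k + V e j * V e j) / 2)).
  - apply rsum_le; intros e _. rewrite Rabs_mult.
    assert (0 <= (Rabs (U e k) - Rabs (V e j)) * (Rabs (U e k) - Rabs (V e j))) by apply Rle_0_sqr.
    assert (Rabs (U e k) * Rabs (U e k) = U e k * U e k) by (rewrite <- Rabs_mult; apply Rabs_pos_eq; nra).
    assert (Rabs (V e j) * Rabs (V e j) = V e j * V e j) by (rewrite <- Rabs_mult; apply Rabs_pos_eq; nra).
    nra.
  - unfold Rdiv. rewrite rsum_scal_r, rsum_plus, E1, E2. lra.
Qed.

Definition Cx (n : nat) (X : mat) : R := rsum n (fun a => rsum n (fun b => Rabs (X a b))).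

Lemma Cx_nonneg n X : 0 <= Cx n X.
Proof. apply rsum_nonneg; intros; apply rsum_nonneg; intros; apply Rabs_pos. Qed.

Lemma quad_bound n X v w : (forall a, (a < n)%nat -> Rabs (v a) <= 1) ->
  (forall b, (b < n)%nat -> Rabs (w b) <= 1) ->
  Rabs (rsum n (fun a => rsum n (fun b => v a * X a b * w b))) <= Cx n X.
Proof.
  intros Hv Hw. eapply Rle_trans; [apply rsum_abs|]. apply rsum_le; intros a Ha.
  eapply Rle_trans; [apply rsum_abs|]. apply rsum_le; intros b Hb.
  rewrite !Rabs_mult. specialize (Hv a Ha). specialize (Hw b Hb).
  assert (0 <= Rabs (v a)) by apply Rabs_pos. assert (0 <= Rabs (w b)) by apply Rabs_pos.
  assert (0 <= Rabs (X a b)) by apply Rabs_pos.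
  apply Rle_trans with (1 * Rabs (X a b) * 1); [|lra].
  apply Rmult_le_compat; try nra.
Qed.

Lemma Qf_bound n U X V k j : is_orth n U -> is_orth n V -> (k < n)%nat -> (j < n)%nat ->
  Rabs (Qf n U X V k j) <= Cx n X.
Proof.
  intros HU HV Hk Hj. unfold Qf. apply quad_bound; intros; eapply orth_entry; eauto.
Qed.

Lemma eigval_quad n B V mu j : is_orth n V -> dec n B V mu -> (j < n)%nat ->
  mu j = rsum n (fun a => rsum n (fun b => V a j * B a b * V b j)).
Proof.
  intros HV Hd Hj.
  transitivity (rsum n (fun a => V a j * (mu j * V a j))).
  - rewrite (rsum_ext n _ (fun a => mu j * (V a j * V a j))) by (intros; ring).
    rewrite rsum_scal_l. assert (E := HV j j Hj Hj). rewrite Nat.eqb_refl in E. rewrite E. ring.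
  - apply rsum_ext; intros a Ha. rewrite <- (eig_col n B V mu HV Hd a j Ha Hj).
    rewrite <- rsum_scal_l. apply rsum_ext; intros; ring.
Qed.

Lemma quad_range n Sg U lam a0 b0 v : is_orth n U -> dec n Sg U lam ->
  (forall k, (k < n)%nat -> a0 <= lam k <= b0) -> rsum n (fun a => v a * v a) = 1 ->
  a0 <= rsum n (fun a => rsum n (fun b => v a * Sg a b * v b)) <= b0.
Proof.
  intros HU Hd Hl Hv.
  set (c := fun k => rsum n (fun a => v a * U a k)).
  assert (Ec : rsum n (fun k => c k * c k) = 1).
  { rewrite <- Hv. unfold c.
    transitivity (rsum n (fun a => rsum n (fun b => v a * v b * rsum n (fun k => U a k * U b k)))).
    - transitivity (rsum n (fun k => rsum n (fun a => rsum n (fun b => v a * U a k * (v b * U b k))))).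
      + apply rsum_ext; intros k _. rewrite <- rsum_scal_r. apply rsum_ext; intros a _.
        rewrite <- rsum_scal_l. auto.
      + rewrite rsum_swap. apply rsum_ext; intros a _. rewrite rsum_swap. apply rsum_ext; intros b _.
        rewrite <- rsum_scal_l. apply rsum_ext; intros; ring.
    - apply rsum_ext; intros a Ha.
      rewrite (rsum_ext n _ (fun b => v a * v b * (if Nat.eqb b a then 1 else 0))).
      + rewrite (rsum_delta_r n (fun b => v a * v b) a Ha). auto.
      + intros b Hb. rewrite (orth_ortR n U HU a b Ha Hb), Nat.eqb_sym. auto. }
  assert (Eq : rsum n (fun a => rsum n (fun b => v a * Sg a b * v b)) = rsum n (fun k => lam k * (c k * c k))).
  { transitivity (rsum n (fun a => rsum n (fun b => rsum n (fun k => v a * U a k * lam k * U b k * v b)))).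
    - apply rsum_ext; intros a Ha. apply rsum_ext; intros b Hb. rewrite Hd by auto.
      rewrite <- rsum_scal_l, <- rsum_scal_r. apply rsum_ext; intros; ring.
    - transitivity (rsum n (fun a => rsum n (fun k => rsum n (fun b => v a * U a k * lam k * U b k * v b)))).
      { apply rsum_ext; intros a _. apply rsum_swap. }
      rewrite rsum_swap. apply rsum_ext; intros k _. unfold c.
      rewrite <- rsum_scal_r, <- rsum_scal_l. apply rsum_ext; intros a _.
      rewrite <- !rsum_scal_l. apply rsum_ext; intros; ring. }
  rewrite Eq. split.
  - apply Rle_trans with (rsum n (fun k => a0 * (c k * c k))).
    + rewrite rsum_scal_l, Ec. lra.
    + apply rsum_le; intros k Hk. specialize (Hl k Hk). assert (0 <= c k * c k) by apply Rle_0_sqr. nra.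
  - apply Rle_trans with (rsum n (fun k => b0 * (c k * c k))).
    + apply rsum_le; intros k Hk. specialize (Hl k Hk). assert (0 <= c k * c k) by apply Rle_0_sqr. nra.
    + rewrite rsum_scal_l, Ec. lra.
Qed.

Lemma fin_lower n (l : nat -> R) : (forall k, (k < n)%nat -> 0 < l k) ->
  exists a0, 0 < a0 /\ forall k, (k < n)%nat -> a0 <= l k.
Proof.
  induction n; intros H.
  - exists 1. split; [lra|intros; lia].
  - destruct IHn as [a0 [Ha0 Hk]]; [intros; apply H; lia|].
    exists (Rmin a0 (l n)). split.
    + apply Rmin_pos; [auto | apply H; lia].
    + intros k Hk'. destruct (Nat.eq_dec k n) as [->|Hne]; [apply Rmin_r|].
      eapply Rle_trans; [apply Rmin_l|apply Hk; lia].
Qed.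

Lemma fin_upper n (l : nat -> R) : exists b0, forall k, (k < n)%nat -> l k <= b0.
Proof.
  induction n.
  - exists 0. intros; lia.
  - destruct IHn as [b0 Hk]. exists (Rmax b0 (l n)). intros k Hk'.
    destruct (Nat.eq_dec k n) as [->|Hne]; [apply Rmax_r|].
    eapply Rle_trans; [apply Hk; lia|apply Rmax_l].
Qed.

Lemma fin_delta n (P : nat -> R -> Prop) :
  (forall k d d', P k d -> 0 < d' -> d' <= d -> P k d') ->
  (forall k, (k < n)%nat -> exists d, 0 < d /\ P k d) ->
  exists d, 0 < d /\ forall k, (k < n)%nat -> P k d.
Proof.
  intros Hmono. induction n; intros H.
  - exists 1. split; [lra|intros; lia].
  - destruct IHn as [d [Hd Hk]]; [intros; apply H; lia|].
    destruct (H n ltac:(lia)) as [d' [Hd' Hn]].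
    exists (Rmin d d'). split; [apply Rmin_pos; auto|].
    intros k Hk'. destruct (Nat.eq_dec k n) as [->|Hne].
    + apply (Hmono n d'); auto. apply Rmin_pos; auto. apply Rmin_r.
    + apply (Hmono k d); auto. apply Hk; lia. apply Rmin_pos; auto. apply Rmin_l.
Qed.

Definition xr (n : nat) (U X : mat) (i b : nat) : R := rsum n (fun a => U a i * X a b).

Lemma Qf_xr n U X V i j : Qf n U X V i j = rsum n (fun b => xr n U X i b * V b j).
Proof.
  unfold Qf, xr. rewrite rsum_swap. apply rsum_ext; intros b _. rewrite rsum_scal_r. auto.
Qed.

Lemma sum_xr n U X V g i q :
  rsum n (fun b => xr n U X i b * rsum n (fun j => V b j * g j * V q j))
  = rsum n (fun j => Qf n U X V i j * g j * V q j).
Proof.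
  transitivity (rsum n (fun b => rsum n (fun j => xr n U X i b * V b j * (g j * V q j)))).
  - apply rsum_ext; intros b _. rewrite <- rsum_scal_l. apply rsum_ext; intros; ring.
  - rewrite rsum_swap. apply rsum_ext; intros j _. rewrite Qf_xr, <- rsum_scal_r, <- rsum_scal_r.
    apply rsum_ext; intros; ring.
Qed.

Lemma expand n f f' U lam V mu X t p q :
  ortR n U -> ortR n V -> t <> 0 ->
  (forall k j, (k < n)%nat -> (j < n)%nat -> (mu j - lam k) * Wm n U V k j = t * Qf n U X V k j) ->
  (p < n)%nat -> (q < n)%nat ->
  (rsum n (fun j => V p j * f (mu j) * V q j) - rsum n (fun i => U p i * f (lam i) * U q i)) / t
   - rsum n (fun i => rsum n (fun j => U p i * Qf n U X U i j * dd f f' (lam i) (lam j) * U q j))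
  = rsum n (fun i => U p i * rsum n (fun b => xr n U X i b *
      rsum n (fun k => rsum n (fun j => U b k * Wm n U V k j *
          (dd f f' (lam i) (mu j) - dd f f' (lam i) (lam k)) * V q j)))).
Proof.
  intros HU HV Ht HW Hp Hq.
  rewrite <- (lemA n U V (fun j => f (mu j)) (fun i => f (lam i)) p q HU HV Hp Hq).
  transitivity (rsum n (fun i => rsum n (fun j => U p i * Qf n U X V i j * dd f f' (lam i) (mu j) * V q j))
     - rsum n (fun i => rsum n (fun j => U p i * Qf n U X U i j * dd f f' (lam i) (lam j) * U q j))).
  - f_equal. unfold Rdiv. rewrite <- rsum_scal_r. apply rsum_ext; intros i Hi.
    rewrite <- rsum_scal_r. apply rsum_ext; intros j Hj.
    assert (E := dd_mul f f' (lam i) (mu j)).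
    assert (E2 : Wm n U V i j * (f (mu j) - f (lam i)) = t * Qf n U X V i j * dd f f' (lam i) (mu j)).
    { rewrite <- HW by auto. replace (f (mu j) - f (lam i)) with (-(f (lam i) - f (mu j))) by ring. rewrite <- E. ring. }
    transitivity (U p i * (Wm n U V i j * (f (mu j) - f (lam i))) * V q j * / t); [ring|].
    rewrite E2. field. auto.
  - rewrite <- rsum_minus. apply rsum_ext; intros i Hi.
    transitivity (U p i * rsum n (fun b => xr n U X i b *
       (rsum n (fun j => V b j * dd f f' (lam i) (mu j) * V q j)
        - rsum n (fun k => U b k * dd f f' (lam i) (lam k) * U q k)))).
    2:{ f_equal. apply rsum_ext; intros b Hb. f_equal. symmetry. apply lemA; auto. }
    rewrite (rsum_ext n (fun b => xr n U X i b *
       (rsum n (fun j => V b j * dd f f' (lam i) (mu j) * V q j)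
        - rsum n (fun k => U b k * dd f f' (lam i) (lam k) * U q k)))
      (fun b => xr n U X i b * rsum n (fun j => V b j * dd f f' (lam i) (mu j) * V q j)
        - xr n U X i b * rsum n (fun k => U b k * dd f f' (lam i) (lam k) * U q k))) by (intros; ring).
    rewrite rsum_minus, !sum_xr. rewrite Rmult_minus_distr_l, <- !rsum_scal_l.
    f_equal; apply rsum_ext; intros; ring.
Qed.

Lemma rsum_bound n f B : (forall i, (i < n)%nat -> Rabs (f i) <= B) -> Rabs (rsum n f) <= INR n * B.
Proof.
  intros H. eapply Rle_trans; [apply rsum_abs|]. rewrite <- rsum_const. apply rsum_le. auto.
Qed.

Lemma xr_bound n U X i b : is_orth n U -> (i < n)%nat -> (b < n)%nat -> Rabs (xr n U X i b) <= Cx n X.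
Proof.
  intros HU Hi Hb. unfold xr, Cx. eapply Rle_trans; [apply rsum_abs|]. apply rsum_le; intros a Ha.
  rewrite Rabs_mult. apply Rle_trans with (Rabs (X a b)).
  - assert (Rabs (U a i) <= 1) by (eapply orth_entry; eauto).
    assert (0 <= Rabs (X a b)) by apply Rabs_pos. nra.
  - apply (term_le_rsum n (fun b => Rabs (X a b))); auto. intros; apply Rabs_pos.
Qed.

Lemma diff_bound n U X V lam mu (hf : nat -> R -> R) p q eta :
  is_orth n U -> is_orth n V -> (p < n)%nat -> (q < n)%nat ->
  (forall i k j, (i < n)%nat -> (k < n)%nat -> (j < n)%nat ->
     Rabs (Wm n U V k j) * Rabs (hf i (mu j) - hf i (lam k)) <= eta) ->
  Rabs (rsum n (fun i => U p i * rsum n (fun b => xr n U X i b *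
      rsum n (fun k => rsum n (fun j => U b k * Wm n U V k j *
          (hf i (mu j) - hf i (lam k)) * V q j)))))
  <= INR n * (INR n * (Cx n X * (INR n * (INR n * eta)))).
Proof.
  intros HU HV Hp Hq H. apply rsum_bound; intros i Hi.
  rewrite Rabs_mult. apply Rle_trans with (1 * (INR n * (Cx n X * (INR n * (INR n * eta))))).
  2: lra.
  apply Rmult_le_compat; try apply Rabs_pos; [eapply orth_entry; eauto|].
  apply rsum_bound; intros b Hb. rewrite Rabs_mult.
  apply Rmult_le_compat; try apply Rabs_pos; [apply xr_bound; auto|].
  apply rsum_bound; intros k Hk. apply rsum_bound; intros j Hj.
  rewrite !Rabs_mult.
  assert (Rabs (U b k) <= 1) by (eapply orth_entry; eauto).
  assert (Rabs (V q j) <= 1) by (eapply orth_entry; eauto).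
  specialize (H i k j Hi Hk Hj).
  assert (0 <= Rabs (U b k)) by apply Rabs_pos. assert (0 <= Rabs (V q j)) by apply Rabs_pos.
  assert (0 <= Rabs (Wm n U V k j)) by apply Rabs_pos.
  assert (0 <= Rabs (hf i (mu j) - hf i (lam k))) by apply Rabs_pos.
  apply Rle_trans with (Rabs (Wm n U V k j) * Rabs (hf i (mu j) - hf i (lam k))); [|exact H].
  set (P := Rabs (Wm n U V k j) * Rabs (hf i (mu j) - hf i (lam k))).
  assert (0 <= P) by (unfold P; nra).
  replace (Rabs (U b k) * Rabs (Wm n U V k j) * Rabs (hf i (mu j) - hf i (lam k)) * Rabs (V q j))
    with ((Rabs (U b k) * Rabs (V q j)) * P) by (unfold P; ring).
  apply Rle_trans with (1 * P); [apply Rmult_le_compat_r; nra|lra].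
Qed.

Lemma deriv_main n f f' (Fm : mat -> nat -> nat -> R) Sg X U lam p q :
  (forall x, 0 < x -> derivable_pt_lim f x (f' x)) ->
  (forall a b, 0 < a -> exists M, forall x, a <= x <= b -> Rabs (f' x) <= M) ->
  (forall B V mu, is_sym n B -> is_orth n V -> dec n B V mu -> (forall k, (k < n)%nat -> 0 < mu k) ->
     forall p q, (p < n)%nat -> (q < n)%nat -> Fm B p q = rsum n (fun j => V p j * f (mu j) * V q j)) ->
  is_sym n Sg -> is_sym n X -> is_orth n U -> dec n Sg U lam -> (forall k, (k < n)%nat -> 0 < lam k) ->
  (p < n)%nat -> (q < n)%nat ->
  derivable_pt_lim (fun t => Fm (fun a b => Sg a b + t * X a b) p q) 0
    (rsum n (fun i => rsum n (fun j => U p i * Qf n U X U i j * dd f f' (lam i) (lam j) * U q j))).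
Proof.
  intros F1 F2 HFm HS HX HU Hd Hl Hp Hq eps Heps.
  destruct (fin_lower n lam Hl) as [a0 [Ha0 Hlo]].
  destruct (fin_upper n lam) as [b0 Hhi].
  set (C := Cx n X). assert (HC : 0 <= C) by apply Cx_nonneg.
  destruct (dd_bound f f' F1 F2 (a0 / 2) (b0 + a0 / 2)) as [M [HM0 HM]]; [lra|].
  set (N := INR n). assert (HN : 0 <= N) by apply pos_INR.
  set (K := N * (N * (C * (N * N)))).
  assert (HK : 0 <= K) by (unfold K; repeat apply Rmult_le_pos; auto).
  set (eta := eps / (K + 1)).
  assert (Heta : 0 < eta) by (unfold eta; apply Rdiv_lt_0_compat; lra).
  assert (HKeta : K * eta < eps).
  { unfold eta. apply Rmult_lt_reg_r with (K + 1); [lra|].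
    replace (K * (eps / (K + 1)) * (K + 1)) with (K * eps) by (field; lra). nra. }
  assert (Hdel : exists d1, 0 < d1 /\ forall i k y, (i < n)%nat -> (k < n)%nat -> 0 < y ->
      Rabs (y - lam k) < d1 -> Rabs (dd f f' (lam i) y - dd f f' (lam i) (lam k)) < eta).
  { destruct (fin_delta n (fun i d => forall k y, (k < n)%nat -> 0 < y ->
        Rabs (y - lam k) < d -> Rabs (dd f f' (lam i) y - dd f f' (lam i) (lam k)) < eta))
      as [d1 [Hd1 Hd1']].
    - intros i d d' Hdd Hd' Hle k y Hk Hy Hyk. apply Hdd; auto. lra.
    - intros i Hi.
      destruct (fin_delta n (fun k d => forall y, 0 < y ->
        Rabs (y - lam k) < d -> Rabs (dd f f' (lam i) y - dd f f' (lam i) (lam k)) < eta))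
        as [d2 [Hd2 Hd2']].
      + intros k d d' Hdd Hd' Hle y Hy Hyk. apply Hdd; auto. lra.
      + intros k Hk. apply dd_cont; auto.
      + exists d2. split; auto.
    - exists d1. split; auto. }
  destruct Hdel as [d1 [Hd1 Hd1']].
  set (del := Rmin (a0 / (2 * (C + 1))) (eta * d1 / (2 * M * C + 1))).
  assert (Hdelp : 0 < del).
  { apply Rmin_pos; apply Rdiv_lt_0_compat; try nra. }
  exists (mkposreal del Hdelp). intros h Hh0 Hhd. simpl in Hhd.
  assert (Hh1 : Rabs h < a0 / (2 * (C + 1))) by (eapply Rlt_le_trans; [apply Hhd|apply Rmin_l]).
  assert (Hh2 : Rabs h < eta * d1 / (2 * M * C + 1)) by (eapply Rlt_le_trans; [apply Hhd|apply Rmin_r]).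
  assert (HhC : Rabs h * C <= a0 / 2).
  { apply Rle_trans with (a0 / (2 * (C + 1)) * C).
    - apply Rmult_le_compat_r; lra.
    - apply Rmult_le_reg_r with (2 * (C + 1)); [lra|].
      replace (a0 / (2 * (C + 1)) * C * (2 * (C + 1))) with (a0 * C) by (field; lra). nra. }
  rewrite Rplus_0_l.
  set (Bh := fun a b => Sg a b + h * X a b).
  assert (HBs : is_sym n Bh).
  { intros a b Ha Hb. unfold Bh. rewrite HS, HX by auto. auto. }
  destruct (spectral n Bh HBs) as [V [mu [HVo HVd]]].
  assert (Hmu : forall j, (j < n)%nat -> a0 / 2 <= mu j <= b0 + a0 / 2).
  { intros j Hj. rewrite (eigval_quad n Bh V mu j HVo HVd Hj).
    assert (E : rsum n (fun a => rsum n (fun b => V a j * Bh a b * V b j)) =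
      rsum n (fun a => rsum n (fun b => V a j * Sg a b * V b j)) +
      h * rsum n (fun a => rsum n (fun b => V a j * X a b * V b j))).
    { rewrite <- rsum_scal_l, <- rsum_plus. apply rsum_ext; intros a _.
      rewrite <- rsum_scal_l, <- rsum_plus. apply rsum_ext; intros b _. unfold Bh. ring. }
    rewrite E.
    assert (Hr := quad_range n Sg U lam a0 b0 (fun a => V a j) HU Hd
                   (fun k Hk => conj (Hlo k Hk) (Hhi k Hk))).
    assert (Hunit : rsum n (fun a => V a j * V a j) = 1).
    { rewrite (HVo j j Hj Hj), Nat.eqb_refl. auto. }
    specialize (Hr Hunit).
    assert (Hq2 : Rabs (rsum n (fun a => rsum n (fun b => V a j * X a b * V b j))) <= C).
    { apply quad_bound; intros; eapply orth_entry; eauto. }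
    assert (Habs : Rabs (h * rsum n (fun a => rsum n (fun b => V a j * X a b * V b j))) <= a0 / 2).
    { rewrite Rabs_mult. eapply Rle_trans; [|apply HhC].
      apply Rmult_le_compat_l; [apply Rabs_pos|auto]. }
    set (z := h * rsum n (fun a => rsum n (fun b => V a j * X a b * V b j))) in *.
    assert (Hz1 := Rle_abs z). assert (Hz2 := Rle_abs (- z)). rewrite Rabs_Ropp in Hz2. lra. }
  assert (Hmupos : forall j, (j < n)%nat -> 0 < mu j) by (intros j Hj; specialize (Hmu j Hj); lra).
  rewrite (HFm Bh V mu HBs HVo HVd Hmupos p q Hp Hq).
  assert (HB0s : is_sym n (fun a b => Sg a b + 0 * X a b)).
  { intros a b Ha Hb. rewrite HS, HX by auto. auto. }
  assert (HB0d : dec n (fun a b => Sg a b + 0 * X a b) U lam).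
  { intros a b Ha Hb. rewrite <- Hd by auto. ring. }
  rewrite (HFm _ U lam HB0s HU HB0d Hl p q Hp Hq).
  assert (HW : forall k j, (k < n)%nat -> (j < n)%nat ->
     (mu j - lam k) * Wm n U V k j = h * Qf n U X V k j).
  { intros k j Hk Hj. apply (W_rel_t n Sg X U lam V mu h HS HU Hd HVo HVd k j Hk Hj). }
  rewrite (expand n f f' U lam V mu X h p q (orth_ortR n U HU) (orth_ortR n V HVo) Hh0 HW Hp Hq).
  eapply Rle_lt_trans; [|apply HKeta].
  replace (K * eta) with (INR n * (INR n * (Cx n X * (INR n * (INR n * eta))))) by (unfold K, N, C; ring).
  apply (diff_bound n U X V lam mu (fun i y => dd f f' (lam i) y) p q eta HU HVo Hp Hq).
  intros i k j Hi Hk Hj.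
  assert (HWb : Rabs (Wm n U V k j) <= 1) by (apply W_bound; auto).
  assert (HWa : 0 <= Rabs (Wm n U V k j)) by apply Rabs_pos.
  destruct (Rlt_le_dec (Rabs (mu j - lam k)) d1) as [Hc|Hc].
  - assert (Rabs (dd f f' (lam i) (mu j) - dd f f' (lam i) (lam k)) < eta)
      by (apply Hd1'; auto).
    assert (0 <= Rabs (dd f f' (lam i) (mu j) - dd f f' (lam i) (lam k))) by apply Rabs_pos.
    nra.
  - assert (Hlk := Hlo k Hk). assert (Hlk' := Hhi k Hk). assert (Hli := Hlo i Hi). assert (Hli' := Hhi i Hi).
    assert (Hdiff : Rabs (dd f f' (lam i) (mu j) - dd f f' (lam i) (lam k)) <= 2 * M).
    { eapply Rle_trans; [apply Rabs_triang|]. rewrite Rabs_Ropp.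
      specialize (Hmu j Hj).
      assert (Rabs (dd f f' (lam i) (mu j)) <= M) by (apply HM; lra).
      assert (Rabs (dd f f' (lam i) (lam k)) <= M) by (apply HM; lra). lra. }
    assert (HWd : Rabs (Wm n U V k j) * d1 <= Rabs h * C).
    { apply Rle_trans with (Rabs (Wm n U V k j) * Rabs (mu j - lam k)).
      - apply Rmult_le_compat_l; auto.
      - rewrite <- Rabs_mult, Rmult_comm, HW by auto. rewrite Rabs_mult.
        apply Rmult_le_compat_l; [apply Rabs_pos|]. apply Qf_bound; auto. }
    assert (H2 : Rabs h * (2 * M * C + 1) <= eta * d1).
    { apply Rmult_le_reg_r with (/ (2 * M * C + 1)).
      - apply Rinv_0_lt_compat. nra.
      - replace (Rabs h * (2 * M * C + 1) * / (2 * M * C + 1)) with (Rabs h) by (field; nra).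
        unfold Rdiv in Hh2. lra. }
    assert (Hfin : Rabs (Wm n U V k j) * (2 * M) * d1 <= eta * d1).
    { assert (0 <= Rabs h) by apply Rabs_pos. nra. }
    assert (Rabs (Wm n U V k j) * (2 * M) <= eta).
    { apply Rmult_le_reg_r with d1; auto. }
    assert (0 <= Rabs (dd f f' (lam i) (mu j) - dd f f' (lam i) (lam k))) by apply Rabs_pos.
    nra.
Qed.

Definition fth (th : R) (l : R) : R :=
  if Req_dec_T th 0 then ln l else / th * exp (th * ln l).
Definition fth' (th : R) (l : R) : R :=
  if Req_dec_T th 0 then / l else exp (th * ln l) / l.

Lemma fth_deriv th x : 0 < x -> derivable_pt_lim (fth th) x (fth' th x).
Proof.
  intros Hx. unfold fth, fth'. destruct Req_dec_T as [E|E].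
  - apply derivable_pt_lim_ln; auto.
  - assert (H1 : derivable_pt_lim (fun l => th * ln l) x (th * / x)).
    { apply (derivable_pt_lim_scal ln th x (/ x)), derivable_pt_lim_ln; auto. }
    assert (H2 := derivable_pt_lim_comp (fun l => th * ln l) exp x (th * / x) (exp (th * ln x))
                  H1 (derivable_pt_lim_exp _)).
    assert (H3 := derivable_pt_lim_scal _ (/ th) x _ H2).
    unfold mult_real_fct, comp in H3.
    replace (exp (th * ln x) / x) with (/ th * (exp (th * ln x) * (th * / x))) by (field; lra).
    exact H3.
Qed.

Lemma ln_le_mono x y : 0 < x -> x <= y -> ln x <= ln y.
Proof. intros Hx Hxy. destruct (Req_dec x y) as [->|Hne]; [lra|]. left; apply ln_increasing; lra. Qed.

Lemma exp_le_mono x y : x <= y -> exp x <= exp y.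
Proof. intros H. destruct (Req_dec x y) as [->|Hne]; [lra|]. left; apply exp_increasing; lra. Qed.

Lemma fth'_bound th a b : 0 < a -> exists M, forall x, a <= x <= b -> Rabs (fth' th x) <= M.
Proof.
  intros Ha. unfold fth'. destruct Req_dec_T as [E|E].
  - exists (/ a). intros x Hx. rewrite Rabs_pos_eq.
    + apply Rinv_le_contravar; lra.
    + left; apply Rinv_0_lt_compat; lra.
  - exists (exp (Rabs th * (Rabs (ln a) + Rabs (ln b))) / a). intros x Hx.
    rewrite Rabs_pos_eq.
    2:{ unfold Rdiv. apply Rmult_le_pos; [left; apply exp_pos|left; apply Rinv_0_lt_compat; lra]. }
    unfold Rdiv. apply Rmult_le_compat.
    + left; apply exp_pos.
    + left; apply Rinv_0_lt_compat; lra.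
    + apply exp_le_mono. eapply Rle_trans; [apply Rle_abs|]. rewrite Rabs_mult.
      apply Rmult_le_compat_l; [apply Rabs_pos|].
      assert (ln a <= ln x) by (apply ln_le_mono; lra).
      assert (ln x <= ln b) by (apply ln_le_mono; lra).
      assert (Hq1 := Rle_abs (ln a)). assert (Hq2 := Rle_abs (- ln a)). rewrite Rabs_Ropp in Hq2.
      assert (Hq3 := Rle_abs (ln b)). assert (Hq4 := Rle_abs (- ln b)). rewrite Rabs_Ropp in Hq4.
      apply Rabs_le. lra.
    + apply Rinv_le_contravar; lra.
Qed.

Lemma fth'_pos th x : 0 < x -> 0 < fth' th x.
Proof.
  intros Hx. unfold fth'. destruct Req_dec_T.
  - apply Rinv_0_lt_compat; auto.
  - apply Rdiv_lt_0_compat; [apply exp_pos|auto].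
Qed.

Lemma phi_char n th B V mu : is_sym n B -> is_orth n V -> dec n B V mu ->
  (forall k, (k < n)%nat -> 0 < mu k) ->
  forall p q, (p < n)%nat -> (q < n)%nat ->
  phi n th B p q = rsum n (fun j => V p j * fth th (mu j) * V q j).
Proof.
  intros HS HV Hd Hmu p q Hp Hq. unfold phi, fth. destruct Req_dec_T as [E|E].
  - unfold logm. apply mfun_char; auto.
  - unfold powm. rewrite (mfun_char n _ B V mu HS HV Hd Hmu p q Hp Hq).
    rewrite <- rsum_scal_l. apply rsum_ext; intros; ring.
Qed.

Lemma dd_pos th x y : 0 < x -> 0 < y -> 0 < dd (fth th) (fth' th) x y.
Proof.
  intros Hx Hy. destruct (dd_mvt (fth th) (fth' th) (fth_deriv th) x y Hx Hy) as [c [Hc ->]].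
  apply fth'_pos. unfold Rmin in Hc. destruct Rle_dec; lra.
Qed.

Definition Tm (n : nat) (th : R) (U X : mat) (lam : nat -> R) : mat := fun p q =>
  rsum n (fun i => rsum n (fun j => U p i * Qf n U X U i j * dd (fth th) (fth' th) (lam i) (lam j) * U q j)).

Lemma dphi_val n th Sg X U lam : is_sym n Sg -> is_sym n X -> is_orth n U -> dec n Sg U lam ->
  (forall k, (k < n)%nat -> 0 < lam k) ->
  meq n (dphi n th Sg X) (Tm n th U X lam).
Proof.
  intros HS HX HU Hd Hl. unfold dphi.
  match goal with |- meq n (epsilon ?i ?P) _ =>
    assert (HD : P (epsilon i P)); [apply epsilon_spec; exists (Tm n th U X lam)|cbv beta in HD] end.
  - intros i j Hi Hj. unfold Tm.
    apply (deriv_main n (fth th) (fth' th) (phi n th) Sg X U lam i j); auto.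
    + apply fth_deriv.
    + apply fth'_bound.
    + intros B V mu HB HV HdV Hmu p q Hp Hq. apply phi_char; auto.
  - intros i j Hi Hj. apply (uniqueness_limite (fun t => phi n th (fun a b => Sg a b + t * X a b) i j) 0); [apply HD; auto|].
    unfold Tm. apply (deriv_main n (fth th) (fth' th) (phi n th) Sg X U lam i j); auto.
    + apply fth_deriv.
    + apply fth'_bound.
    + intros B V mu HB HV HdV Hmu p q Hp Hq. apply phi_char; auto.
Qed.

Definition Hm (n : nat) (th : R) (U X : mat) (lam : nat -> R) : mat := fun i j =>
  Qf n U X U i j * dd (fth th) (fth' th) (lam i) (lam j).

Lemma conj_form n U M p q :
  mmul n (mmul n U M) (trm U) p q = rsum n (fun i => rsum n (fun j => U p i * M i j * U q j)).
Proof.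
  unfold mmul, trm. rewrite rsum_swap. apply rsum_ext; intros j _.
  rewrite <- rsum_scal_r. auto.
Qed.

Lemma Tm_conj n th U X lam : meq n (Tm n th U X lam) (mmul n (mmul n U (Hm n th U X lam)) (trm U)).
Proof.
  intros p q _ _. rewrite conj_form. unfold Tm, Hm. apply rsum_ext; intros; apply rsum_ext; intros; ring.
Qed.

Lemma conj_mul n U A B : is_orth n U ->
  meq n (mmul n (mmul n (mmul n U A) (trm U)) (mmul n (mmul n U B) (trm U)))
        (mmul n (mmul n U (mmul n A B)) (trm U)).
Proof.
  intros HU. rewrite !mmul_assocF. apply meq_mmul_r, meq_mmul_r.
  rewrite <- mmul_assocF. eapply meq_trans; [apply meq_mmul_l, is_orth_meq; auto|]. apply meq_idl.
Qed.

Definition pw (th : R) (l : R) : R := exp (th * ln l).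

Lemma gMPA_val n th1 th2 Sg X Y U lam : is_sym n Sg -> is_sym n X -> is_sym n Y -> is_orth n U ->
  dec n Sg U lam -> (forall k, (k < n)%nat -> 0 < lam k) ->
  gMPA n th1 th2 Sg X Y =
  rsum n (fun a => rsum n (fun b =>
    pw (- ((th1 + th2) / 2)) (lam a) * Hm n th1 U X lam a b *
    pw (- ((th1 + th2) / 2)) (lam b) * Hm n th2 U Y lam b a)).
Proof.
  intros HS HX HY HU Hd Hl. unfold gMPA. cbv zeta.
  set (th := - ((th1 + th2) / 2)).
  set (Dp := diag (fun k => pw th (lam k))).
  set (H1 := Hm n th1 U X lam). set (H2 := Hm n th2 U Y lam).
  assert (HP : meq n (powm n th Sg) (mmul n (mmul n U Dp) (trm U))).
  { intros p q Hp Hq. unfold powm. rewrite (mfun_char n _ Sg U lam HS HU Hd Hl p q Hp Hq).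
    unfold Dp. rewrite <- (proj1 (dec_meq n (fun p q => rsum n (fun k => U p k * pw th (lam k) * U q k)) U (fun k => pw th (lam k)))); auto.
    intros i j _ _. auto. }
  assert (HD1 := meq_trans _ _ _ _ (dphi_val n th1 Sg X U lam HS HX HU Hd Hl) (Tm_conj n th1 U X lam)).
  assert (HD2 := meq_trans _ _ _ _ (dphi_val n th2 Sg Y U lam HS HY HU Hd Hl) (Tm_conj n th2 U Y lam)).
  fold H1 in HD1. fold H2 in HD2.
  rewrite (mtr_meq n _ (mmul n (mmul n U (mmul n (mmul n (mmul n Dp H1) Dp) H2)) (trm U))).
  - rewrite mtr_conj by auto. unfold mtr. apply rsum_ext; intros a Ha. unfold mmul at 1.
    apply rsum_ext; intros b Hb. unfold Dp. rewrite mmul_diag_r by auto. rewrite mmul_diag_l by auto.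
    unfold H1, H2. ring.
  - eapply meq_trans.
    { apply mmul_meq; [apply mmul_meq; [apply mmul_meq|]|]; eauto. }
    eapply meq_trans; [apply mmul_meq; [apply mmul_meq; [apply conj_mul; auto|apply meq_refl]|apply meq_refl]|].
    eapply meq_trans; [apply mmul_meq; [apply conj_mul; auto|apply meq_refl]|].
    apply conj_mul; auto.
Qed.

Lemma Qf_sym n U X i j : is_sym n X -> Qf n U X U i j = Qf n U X U j i.
Proof.
  intros HX. unfold Qf. rewrite rsum_swap. apply rsum_ext; intros a Ha. apply rsum_ext; intros b Hb.
  rewrite (HX b a) by auto. ring.
Qed.

Lemma Hm_sym n th U X lam i j : is_sym n X -> Hm n th U X lam i j = Hm n th U X lam j i.
Proof. intros HX. unfold Hm. rewrite Qf_sym, dd_sym by auto. auto. Qed.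

Lemma Qf_recon n U X : is_orth n U ->
  meq n X (mmul n (mmul n U (fun i j => Qf n U X U i j)) (trm U)).
Proof.
  intros HU.
  assert (E : (fun i j => Qf n U X U i j) = mmul n (mmul n (trm U) X) U).
  { extensionality i; extensionality j. unfold Qf, mmul, trm. rewrite rsum_swap.
    apply rsum_ext; intros b _. rewrite rsum_scal_r. auto. }
  rewrite E.
  assert (E2 : mmul n (mmul n U (mmul n (mmul n (trm U) X) U)) (trm U)
             = mmul n (mmul n (mmul n U (trm U)) X) (mmul n U (trm U))).
  { rewrite !mmul_assocF. auto. }
  rewrite E2. apply meq_sym.
  eapply meq_trans; [apply mmul_meq; [apply meq_mmul_l; apply ortR_meq, orth_ortR; auto|apply ortR_meq, orth_ortR; auto]|].
  eapply meq_trans; [apply meq_idr|apply meq_idl].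
Qed.

Lemma Qf_nonzero n U X : is_orth n U ->
  (exists i j, (i < n)%nat /\ (j < n)%nat /\ X i j <> 0) ->
  exists a b, (a < n)%nat /\ (b < n)%nat /\ Qf n U X U a b <> 0.
Proof.
  intros HU [i [j [Hi [Hj Hx]]]]. apply NNPP. intros Hn. apply Hx.
  rewrite (Qf_recon n U X HU i j Hi Hj), conj_form.
  rewrite (rsum_ext n _ (fun _ => 0)); [apply rsum_0|]. intros a Ha.
  rewrite (rsum_ext n _ (fun _ => 0)); [apply rsum_0|]. intros b Hb.
  assert (Qf n U X U a b = 0) by (apply NNPP; intros C; apply Hn; exists a, b; auto).
  rewrite H. ring.
Qed.

Lemma pw_pos th l : 0 < pw th l.
Proof. unfold pw. apply exp_pos. Qed.

Theorem main_aux (n : nat) (theta1 theta2 : R) (Sg : mat) :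
  is_spd n Sg ->
  (forall X Y : mat, is_sym n X -> is_sym n Y ->
     gMPA n theta1 theta2 Sg X Y = gMPA n theta1 theta2 Sg Y X) /\
  (forall X : mat, is_sym n X ->
     (exists i j, (i < n)%nat /\ (j < n)%nat /\ X i j <> 0) ->
     0 < gMPA n theta1 theta2 Sg X X) /\
  (forall X Y : mat, is_sym n X -> is_sym n Y ->
     gMPA n theta1 theta2 Sg X Y = gMPA n theta2 theta1 Sg X Y).
Proof.
  intros [HS Hpd].
  destruct (spectral n Sg HS) as [U [lam [HU Hd]]].
  assert (Hl : forall k, (k < n)%nat -> 0 < lam k).
  { intros k Hk. rewrite (eigval_quad n Sg U lam k HU Hd Hk). apply Hpd.
    apply NNPP. intros Hn.
    assert (E := HU k k Hk Hk). rewrite Nat.eqb_refl in E.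
    rewrite (rsum_ext n _ (fun _ => 0)) in E; [rewrite rsum_0 in E; lra|].
    intros i Hi. assert (U i k = 0) by (apply NNPP; intros C; apply Hn; exists i; auto).
    rewrite H; ring. }
  split; [|split].
  - intros X Y HX HY. rewrite !(gMPA_val n theta1 theta2 Sg _ _ U lam) by auto.
    apply rsum_ext; intros a Ha. apply rsum_ext; intros b Hb.
    unfold Hm. rewrite (Qf_sym n U X b a), (Qf_sym n U Y b a) by auto. ring.
  - intros X HX Hnz. rewrite (gMPA_val n theta1 theta2 Sg X X U lam) by auto.
    destruct (Qf_nonzero n U X HU Hnz) as [a0 [b0 [Ha0 [Hb0 Hq]]]].
    assert (Hterm : forall a b, (a < n)%nat -> (b < n)%nat ->
      pw (- ((theta1 + theta2) / 2)) (lam a) * Hm n theta1 U X lam a b *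
      pw (- ((theta1 + theta2) / 2)) (lam b) * Hm n theta2 U X lam b a
      = (pw (- ((theta1 + theta2) / 2)) (lam a) * pw (- ((theta1 + theta2) / 2)) (lam b) *
         dd (fth theta1) (fth' theta1) (lam a) (lam b) * dd (fth theta2) (fth' theta2) (lam a) (lam b)) *
        (Qf n U X U a b * Qf n U X U a b)).
    { intros a b Ha Hb. rewrite (Hm_sym n theta2 U X lam b a) by auto. unfold Hm. ring. }
    assert (Hcoef : forall a b, (a < n)%nat -> (b < n)%nat ->
      0 < pw (- ((theta1 + theta2) / 2)) (lam a) * pw (- ((theta1 + theta2) / 2)) (lam b) *
         dd (fth theta1) (fth' theta1) (lam a) (lam b) * dd (fth theta2) (fth' theta2) (lam a) (lam b)).
    { intros a b Ha Hb. repeat apply Rmult_lt_0_compat; try apply pw_pos; apply dd_pos; auto. }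
    apply rsum_pos.
    + intros a Ha. apply rsum_nonneg; intros b Hb. rewrite Hterm by auto.
      apply Rmult_le_pos; [left; apply Hcoef; auto|apply Rle_0_sqr].
    + exists a0. split; auto. apply rsum_pos.
      * intros b Hb. rewrite Hterm by auto.
        apply Rmult_le_pos; [left; apply Hcoef; auto|apply Rle_0_sqr].
      * exists b0. split; auto. rewrite Hterm by auto.
        apply Rmult_lt_0_compat; [apply Hcoef; auto|]. apply Rsqr_pos_lt; auto.
  - intros X Y HX HY. rewrite (gMPA_val n theta1 theta2 Sg X Y U lam) by auto.
    rewrite (gMPA_val n theta2 theta1 Sg X Y U lam) by auto.
    rewrite (Rplus_comm theta2 theta1).
    apply rsum_ext; intros a Ha. apply rsum_ext; intros b Hb.
    unfold Hm. rewrite (Qf_sym n U Y b a), (dd_sym (fth theta1) (fth' theta1) (lam b) (lam a)),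
      (dd_sym (fth theta2) (fth' theta2) (lam b) (lam a)) by auto.
    ring.
Qed.


Theorem theorem5 (n : nat) (theta1 theta2 : R) (S : mat) :
  is_spd n S ->
  (forall X Y : mat, is_sym n X -> is_sym n Y ->
     gMPA n theta1 theta2 S X Y = gMPA n theta1 theta2 S Y X) /\
  (forall X : mat, is_sym n X ->
     (exists i j, (i < n)%nat /\ (j < n)%nat /\ X i j <> 0) ->
     0 < gMPA n theta1 theta2 S X X) /\
  (forall X Y : mat, is_sym n X -> is_sym n Y ->
     gMPA n theta1 theta2 S X Y = gMPA n theta2 theta1 S X Y).
Proof.
  exact (main_aux n theta1 theta2 S).
Qed.
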